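(* Let $(A,E)$ be the direct producted noncommutative probability space over $D_N$ of noncommutative probability spaces $(A_1,\varphi_1),\dots,(A_N,\varphi_N)$. Let $i\neq j$ in $\{1,\dots,N\}$, $a_i\in A_i$, $a_j\in A_j$, and let $e_i\in A$ be the tuple with $a_i$ in the $i$-th coordinate and $0$ elsewhere, and $e_j\in A$ the tuple with $a_j$ in the $j$-th coordinate and $0$ elsewhere. Then $e_i$ and $e_j$ are free over $D_N$ in $(A,E)$.
   Context: Each $(A_j,\varphi_j)$ is a unital complex algebra with a linear functional. $A=\times_{j=1}^N A_j$ with componentwise operations; $D_N=\mathbb{C}^N$ with componentwise operations, identified with the central subalgebra $\{(\alpha_1 1,\dots,\alpha_N 1)\}$ of $A$; $E((a_1,\dots,a_N))=(\varphi_1(a_1),\dots,\varphi_N(a_N))$. $D_N$-valued cumulants: $k_n(y_1,\dots,y_n)=\sum_{\pi\in NC(n)}\prod_{V\in\pi}E(\prod_{l\in V}y_l)\,\mu(\pi,1_n)$. Elements are free over $D_N$ if all mixed $D_N$-valued cumulants of elements of the algebras they generate together with $D_N$ vanish. *)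

(* Defs.v *)
From HB Require Import structures.
From mathcomp Require Import all_boot all_order all_algebra.
From mathcomp Require Import reals.
From mathcomp Require Import complex.
Set Implicit Arguments. Unset Strict Implicit. Unset Printing Implicit Defensive.
Import Order.TTheory GRing.Theory Num.Theory.
Local Open Scope ring_scope.

Notation Cx R := (complex R).

Definition is_partition (n : nat) (p : {set {set 'I_n}}) : bool :=
  partition p [set: 'I_n].

Definition noncrossing (n : nat) (p : {set {set 'I_n}}) : bool :=
  [forall V in p, forall W in p, (V != W) ==>
     [forall a : 'I_n, forall b : 'I_n, forall c : 'I_n, forall d : 'I_n,
        ~~ [&& (a < b)%N, (b < c)%N, (c < d)%N,
               a \in V, c \in V, b \in W & d \in W]]].

Definition is_NC (n : nat) (p : {set {set 'I_n}}) : bool :=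
  is_partition p && noncrossing p.

Definition refines (n : nat) (p q : {set {set 'I_n}}) : bool :=
  [forall V in p, exists W in q, V \subset W].

Definition one_part (n : nat) : {set {set 'I_n}} := [set [set: 'I_n]].

Fixpoint mob_rec (K : pzRingType) (T : finType) (S : {pred T}) (le : rel T)
    (f : nat) (x y : T) : K :=
  match f with
  | 0 => 0
  | f'.+1 =>
      if x == y then 1
      else if le x y then
        - \sum_(z in S | le x z && le z y && (z != y)) @mob_rec K T S le f' x z
      else 0
  end.

Definition moebius (K : pzRingType) (T : finType) (S : {pred T}) (le : rel T)
    (x y : T) : K := @mob_rec K T S le #|S|.+1 x y.

Definition mu_NC (K : pzRingType) (n : nat) (p q : {set {set 'I_n}}) : K :=
  @moebius K _ (@is_NC n) (@refines n) p q.

Section DirectProduct.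
Variables (R : realType) (N : nat) (A : 'I_N -> algType (Cx R)).

Definition prodA := forall k : 'I_N, A k.
Definition DN := 'I_N -> Cx R.

Definition padd (x y : prodA) : prodA := fun k => x k + y k.
Definition pmul (x y : prodA) : prodA := fun k => x k * y k.
Definition dconst (al : DN) : prodA := fun k => al k *: (1 : A k).

Definition single (i : 'I_N) (a : A i) : prodA :=
  fun k => match i =P k with
           | ReflectT e => eq_rect i (fun j => (A j : Type)) a k e
           | ReflectF _ => 0
           end.

Definition Econd (phi : forall k, A k -> Cx R) (x : prodA) : DN :=
  fun k => phi k (x k).

Definition block_prod (n : nat) (V : {set 'I_n}) (y : 'I_n -> prodA) : prodA :=
  fun k => \prod_(l < n | l \in V) y l k.

Definition cumulant (phi : forall k, A k -> Cx R) (n : nat) (y : 'I_n -> prodA)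
  : DN :=
  fun k => \sum_(p : {set {set 'I_n}} | is_NC p)
             (\prod_(V in p) Econd phi (block_prod V y) k) * @mu_NC (Cx R) n p (one_part n).

Inductive gen_with_D (x : prodA) : prodA -> Prop :=
  | gen_x : gen_with_D x x
  | gen_D al : gen_with_D x (dconst al)
  | gen_add u v : gen_with_D x u -> gen_with_D x v -> gen_with_D x (padd u v)
  | gen_mul u v : gen_with_D x u -> gen_with_D x v -> gen_with_D x (pmul u v).

Definition free_over_DN (phi : forall k, A k -> Cx R) (x1 x2 : prodA) : Prop :=
  forall (n : nat) (iota : 'I_n -> bool) (y : 'I_n -> prodA),
    (exists l, iota l) -> (exists l, ~~ iota l) ->
    (forall l, gen_with_D (if iota l then x1 else x2) (y l)) ->
    cumulant phi y = (fun _ => 0).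

End DirectProduct.

(* Main.v *)
Require Import Defs.
From HB Require Import structures.
From mathcomp Require Import all_boot all_order all_algebra.
From mathcomp Require Import reals.
From mathcomp Require Import complex.
From Stdlib Require Import FunctionalExtensionality.
From mathcomp Require Import zify.
Import GRing.Theory.
Local Open Scope ring_scope.

Set Implicit Arguments. Unset Strict Implicit. Unset Printing Implicit Defensive.

Section Mob.
Variables (K : fieldType) (T : finType) (S : {pred T}) (le : rel T).
Hypothesis le_refl : forall x, le x x.
Hypothesis le_trans : forall x y z, le x y -> le y z -> le x z.
Hypothesis le_anti : forall x y, x \in S -> y \in S -> le x y -> le y x -> x = y.

Definition cnt (x y : T) := #|[pred w in S | le x w && le w y]|.

Lemma cnt_lt x y z : z \in S -> y \in S -> le x y -> le z y -> z != y ->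
  (cnt x z < cnt x y)%N.
Proof.
move=> zS yS xy zy nzy; rewrite /cnt; apply: proper_card; apply/properP; split.
  apply/subsetP => w; rewrite !inE => /andP[-> /andP[-> wz]] /=.
  exact: le_trans wz zy.
exists y; first by rewrite !inE yS xy le_refl.
rewrite !inE yS /=; apply/negP => /andP[_ yz].
by move/eqP: nzy; apply; apply: le_anti.
Qed.

Lemma cnt_le x y : (cnt x y <= #|S|)%N.
Proof. by rewrite /cnt; apply: subset_leq_card; apply/subsetP => w; rewrite !inE => /andP[]. Qed.

Lemma mob_stable f g x y : y \in S -> (cnt x y < f)%N -> (cnt x y < g)%N ->
  @mob_rec K T S le f x y = @mob_rec K T S le g x y.
Proof.
elim: f g y => [|f IH] [|g] y yS //= hf hg.
case: eqP => // _; case xy: (le x y) => //; congr (- _).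
apply: eq_bigr => z /andP[zS /andP[/andP[xz zy] nzy]].
have := cnt_lt zS yS xy zy nzy => lt.
by apply: IH => //; apply: leq_trans lt _.
Qed.

Lemma mob_zero x y : x != y -> ~~ le x y -> @moebius K T S le x y = 0.
Proof. by rewrite /moebius /= => /negbTE -> /negbTE ->. Qed.

Lemma mob_diag x : @moebius K T S le x x = 1.
Proof. by rewrite /moebius /= eqxx. Qed.

Lemma mob_left x y : x \in S -> y \in S -> le x y ->
  \sum_(z in S | le x z && le z y) @moebius K T S le x z = (x == y)%:R.
Proof.
move=> xS yS xy; case: (eqVneq x y) => [<-|nxy].
  rewrite (big_pred1 x) ?mob_diag // => z; rewrite !inE.
  apply/idP/eqP => [/andP[zS /andP[xz zx]]|->]; last by rewrite xS le_refl.
  exact: le_anti.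
rewrite (bigD1 y) /=; last by rewrite yS xy le_refl.
rewrite {1}/moebius /= (negbTE nxy) xy.
rewrite addrC; apply/eqP; rewrite subr_eq0.
apply/eqP; apply: eq_big => [z|z /andP[/and3P[zS xz zy] nzy]]; first by rewrite !andbA.
rewrite /moebius; apply: mob_stable => //.
  by apply: leq_trans (cnt_lt zS yS xy zy nzy) _; apply: leq_trans (cnt_le x y) _.
by apply: leq_trans (cnt_lt zS yS xy zy nzy) _; apply: cnt_le.
Qed.

Local Notation mu := (@moebius K T S le).
Definition zeta x y : K := if (x \in S) && (y \in S) then (le x y)%:R else (x == y)%:R.
Definition mm x y : K := if (x \in S) && (y \in S) then mu x y else (x == y)%:R.

Lemma sum_delta_l x (F : T -> K) : \sum_z (x == z)%:R * F z = F x.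
Proof.
rewrite (bigD1 x) //= eqxx mul1r big1 ?addr0 // => z nz.
by rewrite eq_sym (negbTE nz) mul0r.
Qed.

Lemma sum_delta_r y (F : T -> K) : \sum_z F z * (z == y)%:R = F y.
Proof.
rewrite (bigD1 y) //= eqxx mulr1 big1 ?addr0 // => z nz.
by rewrite (negbTE nz) mulr0.
Qed.

Lemma left_full x y : \sum_z mm x z * zeta z y = (x == y)%:R.
Proof.
case xS: (x \in S); last first.
  transitivity (zeta x y); last by rewrite /zeta xS.
  rewrite -(sum_delta_l x (fun z => zeta z y)).
  by apply: eq_bigr => z _; rewrite /mm xS.
case yS: (y \in S); last first.
  transitivity (mm x y); last by rewrite /mm yS andbF.
  rewrite -(sum_delta_r y (mm x)); apply: eq_bigr => z _.
  by rewrite /zeta yS andbF.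
rewrite (bigID (fun z => z \in S)) /= [X in _ + X]big1 ?addr0; last first.
  move=> z /negbTE zS; rewrite /mm zS andbF.
  by case: eqP => [exz|]; [rewrite exz zS in xS|rewrite mul0r].
transitivity (\sum_(z in S | le x z && le z y) mu x z); last first.
  case xy: (le x y); first exact: mob_left.
  rewrite big_pred0; last first.
    by move=> z; apply/negP => /and3P[_ xz zy]; rewrite (le_trans xz zy) in xy.
  by case: eqP => // exy; rewrite exy le_refl in xy.
rewrite big_mkcondr; apply: eq_bigr => z zS.
rewrite /mm /zeta xS zS yS /=; case: (le z y); case xz: (le x z); rewrite ?mulr1 ?mulr0 //=.
rewrite mob_zero ?xz //.
by apply/eqP => exz; rewrite exz le_refl in xz.
Qed.

Lemma right_full x y : \sum_z zeta x z * mm z y = (x == y)%:R.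
Proof.
pose Mm := \matrix_(a, b) mm (enum_val a) (enum_val b) : 'M[K]_#|T|.
pose Mz := \matrix_(a, b) zeta (enum_val a) (enum_val b) : 'M[K]_#|T|.
have H1 : Mm *m Mz = 1%:M.
  apply/matrixP => a b; rewrite !mxE.
  under eq_bigr do rewrite !mxE.
  rewrite -(big_enum_val (fun z => mm (enum_val a) z * zeta z (enum_val b))).
  by rewrite left_full (inj_eq enum_val_inj).
have /matrixP H2 := mulmx1C H1.
have := H2 (enum_rank x) (enum_rank y); rewrite !mxE.
under eq_bigr do rewrite !mxE.
rewrite -(big_enum_val (fun z => zeta (enum_val (enum_rank x)) z * mm z (enum_val (enum_rank y)))).
by rewrite !enum_rankK (inj_eq enum_rank_inj).
Qed.

Lemma mob_right x y : x \in S -> y \in S ->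
  \sum_(z in S | le x z) mu z y = (x == y)%:R.
Proof.
move=> xS yS; rewrite -right_full [RHS](bigID (fun z => z \in S)) /=.
rewrite [X in _ + X]big1 ?addr0; last first.
  move=> z /negbTE zS; rewrite /zeta zS andbF.
  by case: eqP => [exz|]; [rewrite -exz xS in zS|rewrite mul0r].
rewrite big_mkcondr; apply: eq_bigr => z zS.
by rewrite /zeta /mm xS zS yS /=; case: (le x z); rewrite ?mul1r ?mul0r.
Qed.

Variable c : T -> T.
Hypothesis cS : forall x, x \in S -> c x \in S.
Hypothesis cle : forall x, x \in S -> le (c x) x.
Hypothesis cmono : forall x z, x \in S -> z \in S -> le x z -> le (c x) (c z).
Hypothesis cidem : forall x, x \in S -> c (c x) = c x.

Lemma crapo_G y : y \in S -> c y != y -> forall s, s \in S -> c s = s ->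
  \sum_(x in S | c x == s) mu x y = 0.
Proof.
move=> yS cy s; have [k] := ubnP #|[pred u in S | le s u]|.
elim: k s => // k IH s hk sS cs.
have sy : s != y by apply/eqP => esy; rewrite -esy cs eqxx in cy.
have E := mob_right sS yS; rewrite (negbTE sy) mulr0n in E.
rewrite (partition_big c (fun t => (t \in S) && (c t == t) && le s t)) /= in E;
  last first.
  move=> z /andP[zS sz]; rewrite cS // cidem // eqxx /= -cs.
  exact: cmono.
rewrite (bigD1 s) /= in E; last by rewrite sS cs eqxx le_refl.
rewrite [X in _ + X = _]big1 ?addr0 in E; last first.
  move=> t /andP[/andP[/andP[tS /eqP ct] st] nts].
  transitivity (\sum_(x in S | c x == t) mu x y); last first.
    apply: IH => //.
    rewrite ltnS in hk; apply: leq_trans hk; apply: proper_card; apply/properP; split.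
      by apply/subsetP => u; rewrite !inE => /andP[-> tu]; rewrite (le_trans st tu).
    exists s; first by rewrite !inE sS le_refl.
    rewrite !inE sS /=; apply/negP => ts.
    by move/eqP: nts; apply; apply: le_anti.
  apply: eq_bigl => z; apply/idP/idP => [/andP[/andP[zS _] czt]|/andP[zS /eqP czt]]; first by rewrite zS czt.
  by rewrite zS czt eqxx andbT /= (le_trans st) // -czt cle.
rewrite -[RHS]E; apply: eq_bigl => z; apply/idP/idP => [/andP[zS /eqP czs]|/andP[/andP[zS _] czs]]; last by rewrite zS czs.
by rewrite zS czs eqxx andbT /=; rewrite -czs; apply: cle.
Qed.

Lemma crapo y (f : T -> K) : y \in S -> c y != y -> (forall x, x \in S -> f x = f (c x)) ->
  \sum_(x in S) f x * mu x y = 0.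
Proof.
move=> yS cy hf.
rewrite (eq_bigr (fun x => f (c x) * mu x y)); last by move=> x xS; rewrite -hf.
rewrite (partition_big c (fun t => (t \in S) && (c t == t))) /=; last first.
  by move=> z zS; rewrite cS // cidem // eqxx.
apply: big1 => t /andP[tS /eqP ct].
rewrite (eq_bigr (fun x => f t * mu x y)); last by move=> x /andP[_ /eqP ->].
by rewrite -mulr_sumr crapo_G // mulr0.
Qed.
End Mob.

Section NC.
Variables (n : nat).
Implicit Types (p q : {set {set 'I_n}}) (V W U : {set 'I_n}).

Lemma refines_refl p : refines p p.
Proof. by apply/forallP => V; apply/implyP => Vp; apply/existsP; exists V; rewrite Vp subxx. Qed.

Lemma refinesP p q : reflect (forall V, V \in p -> exists2 W, W \in q & V \subset W) (refines p q).
Proof.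
apply: (iffP forallP) => [H V Vp|H V].
  by move: (H V); rewrite Vp /= => /existsP[W /andP[Wq VW]]; exists W.
apply/implyP => Vp; have [W Wq VW] := H V Vp; apply/existsP; exists W; by rewrite Wq VW.
Qed.

Lemma refines_trans p q r : refines p q -> refines q r -> refines p r.
Proof.
move=> /refinesP pq /refinesP qr; apply/refinesP => V /pq [W /qr [X Xr WX] VW].
by exists X => //; apply: subset_trans VW WX.
Qed.

Lemma part_eq p V W x : is_partition p -> V \in p -> W \in p -> x \in V -> x \in W -> V = W.
Proof.
move=> /and3P[_ tp _] Vp Wp xV xW.
by rewrite -(def_pblock tp Vp xV) (def_pblock tp Wp xW).
Qed.

Lemma part_cover p x : is_partition p -> x \in pblock p x /\ pblock p x \in p.
Proof.
move=> /and3P[/eqP cp _ _]; rewrite mem_pblock pblock_mem ?cp ?inE //.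
Qed.

Lemma part_nonempty p V : is_partition p -> V \in p -> exists x, x \in V.
Proof.
move=> /and3P[_ _ p0] Vp; apply/set0Pn; apply/eqP => V0.
by rewrite -V0 Vp in p0.
Qed.

Lemma refines_anti p q : is_partition p -> is_partition q -> refines p q -> refines q p -> p = q.
Proof.
move=> pp pq /refinesP hpq /refinesP hqp.
have sub : forall p q, is_partition p -> (forall V, V \in p -> exists2 W, W \in q & V \subset W) ->
   (forall V, V \in q -> exists2 W, W \in p & V \subset W) -> p \subset q.
  move=> p1 q1 pp1 h1 h2; apply/subsetP => V Vp.
  have [W Wq VW] := h1 V Vp; have [X Xp WX] := h2 W Wq.
  have [x xV] := part_nonempty pp1 Vp.
  have eVX : V = X by apply: (part_eq pp1 Vp Xp xV); apply: (subsetP WX); apply: (subsetP VW).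
  suff -> : V = W by [].
  by apply/eqP; rewrite eqEsubset VW; rewrite eVX.
by apply/eqP; rewrite eqEsubset !sub.
Qed.

Variable l0 : 'I_n.
Definition sep p := [set l0] |: (((fun V => V :\ l0) @: p) :\ set0).

Lemma in_sep U p : (U \in sep p) = (U == [set l0]) || ((U != set0) && (U \in (fun V => V :\ l0) @: p)).
Proof. by rewrite /sep in_setU1 in_setD1. Qed.


Lemma sepP U p : U \in sep p -> U = [set l0] \/ exists2 V, V \in p & U = V :\ l0.
Proof.
rewrite in_sep => /orP[/eqP->|/andP[_ /imsetP[V Vp ->]]]; [by left|right; by exists V].
Qed.

Lemma sep_in V p : V \in p -> V :\ l0 != set0 -> V :\ l0 \in sep p.
Proof. by move=> Vp nV; rewrite in_sep nV; apply/orP; right; apply/imsetP; exists V. Qed.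

Lemma l0_sep p : [set l0] \in sep p.
Proof. by rewrite in_sep eqxx. Qed.

Lemma sep_part p : is_partition p -> is_partition (sep p).
Proof.
move=> pp; apply/and3P; split.
- apply/eqP/setP => x; rewrite inE; apply/bigcupP.
  case: (eqVneq x l0) => [->|nx]; first by exists [set l0]; rewrite ?l0_sep ?set11.
  have [xV Vp] := part_cover x pp.
  exists (pblock p x :\ l0); last by rewrite in_setD1 nx xV.
  by apply: sep_in => //; apply/set0Pn; exists x; rewrite in_setD1 nx xV.
- apply/trivIsetP => A B /sepP hA /sepP hB nAB; rewrite disjoint_subset; apply/subsetP => x xA; rewrite inE; apply/negP => xB.
  case: hA => [eA|[V Vp eA]]; case: hB => [eB|[W Wp eB]].
  + by rewrite eA eB eqxx in nAB.
  + by move: xA xB; rewrite eA eB in_set1 in_setD1 => ->.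
  + by move: xA xB; rewrite eA eB in_set1 in_setD1 => /andP[/negbTE ->].
  + move: xA xB; rewrite eA eB !in_setD1 => /andP[_ xV] /andP[_ xW].
    by rewrite eA eB (part_eq pp Vp Wp xV xW) eqxx in nAB.
- rewrite in_sep eqxx /= orbF; apply/negP => /eqP/setP/(_ l0).
  by rewrite in_set0 set11.
Qed.

Lemma ncP p V W (a b c d : 'I_n) : noncrossing p -> V \in p -> W \in p -> V != W ->
  (a < b)%N -> (b < c)%N -> (c < d)%N -> a \in V -> c \in V -> b \in W -> d \in W -> False.
Proof.
move=> ncp Vp Wp nVW ab bc cd aV cV bW dW.
move/forallP: ncp => /(_ V); rewrite Vp implyTb => /forallP/(_ W); rewrite Wp nVW !implyTb.
move=> /forallP/(_ a)/forallP/(_ b)/forallP/(_ c)/forallP/(_ d) H.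
by move/negP: H; apply; rewrite ab bc cd aV cV bW dW.
Qed.

Lemma sep_NC p : is_NC p -> is_NC (sep p).
Proof.
move=> /andP[pp ncp]; rewrite /is_NC sep_part //=.
apply/forallP => A; apply/implyP => /sepP hA; apply/forallP => B; apply/implyP => /sepP hB.
apply/implyP => nAB; apply/forallP => a; apply/forallP => b; apply/forallP => c; apply/forallP => d.
apply/negP => /andP[ab /andP[bc /andP[cd /andP[aA /andP[cA /andP[bB dB]]]]]].
case: hA => [eA|[V Vp eA]].
  move: aA cA; rewrite eA !in_set1 => /eqP ea /eqP ec.
  by move: (ltn_trans ab bc); rewrite ea ec ltnn.
case: hB => [eB|[W Wp eB]].
  move: bB dB; rewrite eB !in_set1 => /eqP eb /eqP ed.
  by move: (ltn_trans bc cd); rewrite eb ed ltnn.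
have nVW : V != W by apply: contraNneq nAB => eVW; rewrite eA eB eVW.
move: aA cA bB dB; rewrite eA eB !in_setD1 => /andP[_ aV] /andP[_ cV] /andP[_ bW] /andP[_ dW].
exact: (ncP ncp Vp Wp nVW ab bc cd aV cV bW dW).
Qed.

Lemma sep_le p : is_partition p -> refines (sep p) p.
Proof.
move=> pp; apply/refinesP => U /sepP[->|[V Vp ->]].
  have [l0V Vp] := part_cover l0 pp; exists (pblock p l0) => //.
  by rewrite sub1set.
by exists V => //; apply: subsetDl.
Qed.

Lemma sep_mono p q : refines p q -> refines (sep p) (sep q).
Proof.
move=> /refinesP pq; apply/refinesP => U /sepP[->|[V Vp ->]].
  by exists [set l0]; rewrite ?l0_sep ?subxx.
case: (eqVneq (V :\ l0) set0) => [->|nV].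
  by exists [set l0]; rewrite ?l0_sep ?sub0set.
have [W Wq VW] := pq V Vp.
have VW' : V :\ l0 \subset W :\ l0 by apply: setSD.
exists (W :\ l0) => //; apply: sep_in => //.
have /set0Pn [x xV] := nV; apply/set0Pn; exists x; exact: (subsetP VW').
Qed.

Lemma img_sep p U : U != set0 ->
  (U \in (fun V => V :\ l0) @: sep p) = (U \in (fun V => V :\ l0) @: p).
Proof.
move=> nU; apply/imsetP/imsetP => [[V /sepP[->|[W Wp ->]] eU]|[W Wp eU]].
- by rewrite eU setDv eqxx in nU.
- by exists W => //; rewrite eU setDDl setUid.
- exists (W :\ l0); last by rewrite setDDl setUid.
  by apply: sep_in => //; rewrite -eU.
Qed.

Lemma sep_idem p : sep (sep p) = sep p.
Proof.
apply/setP => U; rewrite !in_sep; case: (eqVneq U set0) => //= nU.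
by rewrite img_sep.
Qed.

Lemma one_part_NC : (0 < n)%N -> is_NC (one_part n).
Proof.
move=> n0; apply/andP; split.
  apply/and3P; split; rewrite /one_part ?cover1 ?trivIset1 //.
  rewrite in_set1; apply/negP => /eqP/setP/(_ (Ordinal n0)).
  by rewrite !inE.
apply/forallP => V; apply/implyP => /set1P ->; apply/forallP => W; apply/implyP => /set1P ->.
by rewrite eqxx.
Qed.

Lemma sep_one : (1 < n)%N -> sep (one_part n) != one_part n.
Proof.
move=> n1; have n0 : (0 < n)%N by apply: ltn_trans n1.
have [x nx] : exists x : 'I_n, x != l0.
  case: (eqVneq (Ordinal n0) l0) => [e|ne]; last by exists (Ordinal n0).
  by exists (Ordinal n1); rewrite -e.
apply/negP => /eqP e; have := l0_sep (one_part n); rewrite e in_set1 => /eqP/setP/(_ x).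
by rewrite !inE (negbTE nx).
Qed.


Lemma l0_in p V : is_partition p -> V \in p -> V :\ l0 = set0 -> l0 \in V.
Proof.
move=> pp Vp V0; have [x xV] := part_nonempty pp Vp.
case: (eqVneq x l0) => [<-//|nx].
have : x \in V :\ l0 by rewrite in_setD1 nx xV.
by rewrite V0 in_set0.
Qed.

Lemma setD1_inj p : is_partition p -> {in p &, injective (fun V => V :\ l0)}.
Proof.
move=> pp V W Vp Wp /= e.
case: (eqVneq (V :\ l0) set0) => [V0|nV].
  apply: (part_eq pp Vp Wp (l0_in pp Vp V0)); apply: (l0_in pp Wp); by rewrite -e.
have /set0Pn [x xV'] := nV.
have xW' : x \in W :\ l0 by rewrite -e.
move: xV' xW'; rewrite !in_setD1 => /andP[_ xV] /andP[_ xW].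
exact: (part_eq pp Vp Wp xV xW).
Qed.
End NC.

Section Alg.
Variables (K : fieldType) (B : algType K) (phi : B -> K).
Hypothesis phi_lin : forall (c : K) (a b : B), phi (c *: a + b) = c * phi a + phi b.
Hypothesis phi_unit : phi 1 = 1.

Lemma phi0 : phi 0 = 0.
Proof.
have := phi_lin 1 0 0; rewrite scale1r addr0 mul1r.
by move/(congr1 (fun x => x - phi 0)); rewrite subrr addrK.
Qed.

Lemma phiZ c a : phi (c *: a) = c * phi a.
Proof. by have := phi_lin c a 0; rewrite !addr0 phi0 addr0. Qed.

Lemma scale_prod (I : Type) (r : seq I) (P : pred I) (d : I -> K) (G : I -> B) :
  \prod_(i <- r | P i) (d i *: G i) = (\prod_(i <- r | P i) d i) *: \prod_(i <- r | P i) G i.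
Proof.
elim: r => [|a r IH]; first by rewrite !big_nil scale1r.
rewrite !big_cons; case: (P a) => //.
by rewrite IH -scalerAl -scalerAr scalerA.
Qed.

Variables (n : nat) (l0 : 'I_n) (y : 'I_n -> B) (c : K).
Hypothesis hy : y l0 = c *: 1.

Lemma P_split (W : {set 'I_n}) : \prod_(l < n | l \in W) y l =
  (if l0 \in W then c else 1) *: \prod_(l < n | l \in W :\ l0) y l.
Proof.
rewrite (eq_bigr (fun l => (if l == l0 then c else 1) *: (if l == l0 then 1 else y l))); last first.
  by move=> l _; case: eqP => [->|_]; rewrite ?hy ?scale1r.
rewrite scale_prod; congr (_ *: _).
  rewrite -big_mkcondr /=; case: (boolP (l0 \in W)) => l0W.
    rewrite (big_pred1 l0) // => l; apply/andP/eqP => [[] _ /eqP //|->]; by rewrite l0W.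
  by rewrite big_pred0 // => l; apply/andP => -[lW /eqP el]; rewrite -el lW in l0W.
rewrite [LHS]big_mkcond [RHS]big_mkcond; apply: eq_bigr => l _.
by rewrite in_setD1; case: eqP => [->|_] /=; case: (_ \in W).
Qed.

Definition gU (U : {set 'I_n}) := phi (\prod_(l < n | l \in U) y l).
Definition fP (p : {set {set 'I_n}}) := \prod_(V in p) phi (\prod_(l < n | l \in V) y l).

Lemma gU0 : gU set0 = 1.
Proof. by rewrite /gU big_pred0 ?phi_unit // => l; rewrite in_set0. Qed.

Lemma f_form p : is_partition p -> fP p = c * \prod_(V in p) gU (V :\ l0).
Proof.
move=> pp; rewrite /fP (eq_bigr (fun V : {set 'I_n} => (if l0 \in V then c else 1) * gU (V :\ l0))); last first.
  by move=> V _; rewrite P_split phiZ.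
rewrite big_split /=; congr (_ * _).
have [l0V Vp] := part_cover l0 pp.
rewrite (bigD1 (pblock p l0)) //= l0V big1 ?mulr1 // => V /andP[Vp' nV].
case: ifP => // l0V'; case/eqP: nV; exact: (part_eq pp Vp' Vp l0V' l0V).
Qed.

Lemma Pi_img p : is_partition p ->
  \prod_(V in p) gU (V :\ l0) = \prod_(U in (fun V => V :\ l0) @: p) gU U.
Proof.
move=> pp; rewrite big_imset //=; exact: setD1_inj.
Qed.

Lemma drop0 (A : {set {set 'I_n}}) :
  \prod_(U in A) gU U = \prod_(U in A | U != set0) gU U.
Proof.
rewrite [RHS]big_mkcondr; apply: eq_bigr => U _.
by case: eqP => [->|]; rewrite ?gU0.
Qed.

Lemma f_sep p : is_NC p -> fP p = fP (sep l0 p).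
Proof.
move=> /andP[pp ncp]; have sp := sep_part l0 pp.
rewrite !f_form // !Pi_img // !drop0; congr (_ * _).
apply: eq_bigl => U. case: (eqVneq U set0) => [->|nU]; rewrite ?andbF /= ?andbT ?img_sep //.
Qed.


Lemma core : (1 < n)%N ->
  \sum_(p : {set {set 'I_n}} | is_NC p) fP p * mu_NC K p (one_part n) = 0.
Proof.
move=> n1.
have n0 : (0 < n)%N by apply: ltn_trans n1.
apply: (@crapo K _ (@is_NC n) (@refines n) (@refines_refl n) (@refines_trans n) _ (sep l0)).
- move=> x z /andP[xp _] /andP[zp _]; exact: refines_anti.
- by move=> x xS; apply: sep_NC.
- by move=> x /andP[xp _]; apply: sep_le.
- by move=> x z _ _; apply: sep_mono.
- by move=> x _; apply: sep_idem.
- exact: one_part_NC.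
- exact: sep_one.
- by move=> x xS; apply: f_sep.
Qed.
End Alg.

Unset Implicit Arguments. Set Strict Implicit. Set Printing Implicit Defensive.

Lemma gen_scalar (R : realType) (N : nat) (A : 'I_N -> algType (complex R))
  (x u : prodA A) (k : 'I_N) : x k = 0 -> gen_with_D x u -> exists c, u k = c *: 1.
Proof.
move=> xk; elim => [|al|u1 v1 _ [a ha] _ [b hb]|u1 v1 _ [a ha] _ [b hb]].
- by exists 0; rewrite xk scale0r.
- by exists (al k).
- by exists (a + b); rewrite /padd ha hb scalerDl.
- by exists (a * b); rewrite /pmul ha hb -scalerAl mul1r scalerA.
Qed.

Lemma single_zero (R : realType) (N : nat) (A : 'I_N -> algType (complex R))
  (i k : 'I_N) (a : A i) : i != k -> single a k = 0.
Proof.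
move=> nik; rewrite /single; case: eqP => [e|//].
by rewrite e eqxx in nik.
Qed.

Theorem mainTheorem4 (R : realType) (N : nat) (A : 'I_N -> algType (complex R))
    (phi : forall k : 'I_N, A k -> complex R)
    (phi_lin : forall (k : 'I_N) (c : complex R) (a b : A k),
        phi k (c *: a + b) = c * phi k a + phi k b)
    (phi_unit : forall k : 'I_N, phi k 1 = 1)
    (i j : 'I_N) (hij : i != j) (ai : A i) (aj : A j) :
  free_over_DN phi (single ai) (single aj).
Proof.
move=> n iota y [l1 h1] [l2 h2] hgen.
have n1 : (1 < n)%N.
  have nl : l1 != l2 by apply/eqP => e; rewrite e (negbTE h2) in h1.
  have nl' : nat_of_ord l1 != nat_of_ord l2 by [].
  move: nl' (ltn_ord l1) (ltn_ord l2); lia.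
apply: functional_extensionality => k.
have [l0 [c hc]] : exists l0, exists c, y l0 k = c *: 1.
  case: (eqVneq k i) => [ek|nki].
    exists l2; have := hgen l2; rewrite (negbTE h2) => hg; apply: (@gen_scalar _ _ _ _ _ k _ hg).
    by apply: single_zero; rewrite ek eq_sym.
  exists l1; have := hgen l1; rewrite h1 => hg; apply: (@gen_scalar _ _ _ _ _ k _ hg).
  by apply: single_zero; rewrite eq_sym.
exact: (core (phi_lin k) (phi_unit k) (y := fun l => y l k) hc n1).
Qed.
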